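(* Let $N\ge 2$. For generic $x\in\mathbb{C}^N$ the Heisenberg bispectrum $B^H(x)$ determines the magnitude vector $(|x_0|,\dots,|x_{N-1}|)$ up to a cyclic shift and the Fourier-magnitude vector $(|\hat x[0]|,\dots,|\hat x[N-1]|)$ up to a cyclic shift: that is, if $x'\in\mathbb{C}^N$ satisfies $B^H(x')=B^H(x)$, then there exist $k_0,n_0\in\mathbb{Z}_N$ with $|x'_j|=|x_{j+k_0}|$ and $|\hat x'[k]|=|\hat x[k+n_0]|$ for all $j,k\in\mathbb{Z}_N$.
   Context: $\zeta=e^{2\pi i/N}$; indices modulo $N$. The discrete Fourier transform of $u\in\mathbb{C}^N$ is $\hat u[k]=\sum_{j=0}^{N-1}u_j\zeta^{-jk}$. For $x\in\mathbb{C}^N$ let $y=(|x_0|^2,\dots,|x_{N-1}|^2)$ and $z=(|\hat x[0]|^2,\dots,|\hat x[N-1]|^2)$, define $B^M(x)(i,j)=\hat y[i]\hat y[j]\hat y[N-i-j]$, $B^{FM}(x)(i,j)=\hat z[i]\hat z[j]\hat z[N-i-j]$ for $i,j\in\mathbb{Z}_N$, and $B^H(x)=(B^M(x),B^{FM}(x))$. ''Generic'' means: for all $x$ outside a fixed proper real algebraic subset of $\mathbb{C}^N\cong\mathbb{R}^{2N}$. *)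

(* Defs.v *)
From mathcomp Require Import all_boot all_algebra.
From mathcomp Require Import complex.
From mathcomp Require Import reals trigo.
From mathcomp Require Import mpoly.

Set Implicit Arguments.
Unset Strict Implicit.
Unset Printing Implicit Defensive.
Import GRing.Theory Num.Theory.
Local Open Scope ring_scope.

Definition zeta (R : realType) (N : nat) : R[i] :=
  Complex (cos (2 * pi / N%:R)) (sin (2 * pi / N%:R)).

(* Indices are taken in 'Z_N (integers mod N; we always assume 2 <= N). *)
Definition dft (R : realType) (N : nat) (u : 'Z_N -> R[i]) (k : 'Z_N) : R[i] :=
  \sum_(j : 'Z_N) u j * (zeta R N ^+ (val j * val k))^-1.

Definition sqmag (R : realType) (N : nat) (x : 'Z_N -> R[i]) : 'Z_N -> R[i] :=
  fun j => `|x j| ^+ 2.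

Definition BM (R : realType) (N : nat) (x : 'Z_N -> R[i]) (i j : 'Z_N) : R[i] :=
  let yh := dft (sqmag x) in yh i * yh j * yh (- (i + j)).

Definition BFM (R : realType) (N : nat) (x : 'Z_N -> R[i]) (i j : 'Z_N) : R[i] :=
  let zh := dft (sqmag (dft x)) in zh i * zh j * zh (- (i + j)).

(* B^H(x) = (B^M(x), B^FM(x)); equality of Heisenberg bispectra *)
Definition BH_eq (R : realType) (N : nat) (x x' : 'Z_N -> R[i]) : Prop :=
  (forall i j : 'Z_N, BM x' i j = BM x i j) /\
  (forall i j : 'Z_N, BFM x' i j = BFM x i j).

Definition realcoords (R : realType) (N : nat) (x : 'Z_N -> R[i])
  (m : 'I_(2 * N)) : R :=
  if (val m < N)%N then complex.Re (x (inZp (val m))) else complex.Im (x (inZp (val m - N))).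

(* "P holds generically": P holds outside the zero set of a nonzero real
   polynomial in the 2N real coordinates (a proper real algebraic subset). *)
Definition generic (R : realType) (N : nat) (P : ('Z_N -> R[i]) -> Prop) : Prop :=
  exists Q : mpoly.mpoly (2 * N) R, Q != 0 /\
    forall x : 'Z_N -> R[i], mpoly.meval (realcoords x) Q != 0 -> P x.

(* Main.v *)
Require Import Defs.
From mathcomp Require Import all_boot all_algebra.
From mathcomp Require Import complex.
From mathcomp Require Import reals trigo.
From mathcomp Require Import ring lra zify.
From mathcomp Require Import mpoly.
Import GRing.Theory Num.Theory.
Local Open Scope ring_scope.

Section Zeta.
Variables (R : realType) (n : nat).
Local Notation N := n.+2.
Local Notation th := (2 * pi / N%:R : R).

Lemma zeta_exp k : zeta R N ^+ k = Complex (cos (k%:R * th)) (sin (k%:R * th)).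
Proof.
elim: k => [|k IH]; first by rewrite expr0 mul0r cos0 sin0.
rewrite exprSr IH /zeta -[k.+1]addn1 natrD [(k%:R + 1) * _]mulrDl mul1r cosD sinD.
apply/eqP; rewrite eq_complex /=; apply/andP; split; apply/eqP; ring.
Qed.

Lemma zetaN : zeta R N ^+ N = 1.
Proof.
rewrite zeta_exp mulrCA divff ?pnatr_eq0 // mulr1.
have -> : (2 * pi : R) = pi *+ 2 by rewrite mulr_natl.
by rewrite cos2pi sin2pi.
Qed.

Lemma zeta_neq1 k : (0 < k < N)%N -> zeta R N ^+ k != 1.
Proof.
move=> /andP[k0 kN]; rewrite zeta_exp; apply/negP => /eqP [].
pose u : R := k%:R * pi / N%:R.
have -> : k%:R * th = u *+ 2 by rewrite /u; rewrite -mulr_natr; ring.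
rewrite cos_mulr2n cos2sin2 => h _.
have : 0 < sin u.
  apply: sin_gt0_pi; apply/andP; split.
    rewrite /u divr_gt0 ?mulr_gt0 ?pi_gt0 ?ltr0n //.
  by rewrite /u ltr_pdivrMr ?ltr0n // mulrC ltr_pM2l ?pi_gt0 // ltr_nat.
move: h; rewrite mulr2n => h hs; nra.
Qed.

Lemma zprim : N.-primitive_root (zeta R N).
Proof.
have [m pm mN] := prim_order_exists (ltn0Sn n.+1) zetaN.
have m0 := prim_order_gt0 pm.
have mle : (m <= N)%N by apply: dvdn_leq.
suff e : m = N by move: pm; rewrite e.
apply/eqP; rewrite eqn_leq mle leqNgt; apply/negP => mlt.
by move: (@zeta_neq1 m); rewrite m0 mlt prim_expr_order // eqxx => /(_ isT).
Qed.
End Zeta.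

Section DFT.
Variables (R : realType) (n : nat).
Local Notation N := n.+2.
Local Notation Z := 'Z_N.
Local Notation zt := (zeta R N).

Definition chi (u : Z) : R[i] := zt ^+ val u.

Lemma zt_neq0 : zt != 0.
Proof. by rewrite (prim_root_eq0 (@zprim R n)). Qed.

Lemma chi_neq0 u : chi u != 0.
Proof. by rewrite /chi expf_neq0 // zt_neq0. Qed.

Lemma chiD u v : chi (u + v) = chi u * chi v.
Proof.
rewrite /chi; change (val (u + v)) with ((val u + val v) %% N)%N.
by rewrite (prim_expr_mod (@zprim R n)) exprD.
Qed.

Lemma chiM u v : chi (u * v) = zt ^+ (val u * val v).
Proof.
rewrite /chi; change (val (u * v)) with ((val u * val v) %% N)%N.
by rewrite (prim_expr_mod (@zprim R n)).
Qed.

Lemma chi0 : chi 0 = 1.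
Proof. by rewrite /chi expr0. Qed.

Lemma chiN u : chi (- u) = (chi u)^-1.
Proof.
apply: (mulIf (chi_neq0 u)); rewrite -chiD addNr chi0 mulVf //; exact: chi_neq0.
Qed.

Lemma dftE (f : Z -> R[i]) k : dft f k = \sum_(j : Z) f j * (chi (j * k))^-1.
Proof. by rewrite /dft; apply: eq_bigr => j _; rewrite chiM. Qed.

Lemma orth k : \sum_(j : Z) chi (j * k) = (N * (k == 0))%:R.
Proof.
under eq_bigr do rewrite chiM mulnC exprM.
change (\sum_(j < N) (zt ^+ val k) ^+ j = (N * (k == 0))%:R).
have [->|k0] := eqVneq k 0.
  rewrite muln1; under eq_bigr do rewrite expr0 expr1n.
  by rewrite sumr_const card_ord.
rewrite muln0.
have w1 : zt ^+ val k != 1.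
  apply: zeta_neq1; rewrite ltn_ord andbT lt0n; apply: contra k0 => /eqP k0.
  by apply/eqP; apply: val_inj.
have wN : (zt ^+ val k) ^+ N = 1 by rewrite exprAC zetaN expr1n.
have := subrX1 (zt ^+ val k) N; rewrite wN subrr => /esym /eqP.
by rewrite mulf_eq0 subr_eq0 (negPf w1) /= => /eqP.
Qed.

Lemma orthV k : \sum_(j : Z) (chi (j * k))^-1 = (N * (k == 0))%:R.
Proof.
under eq_bigr do rewrite -chiN -mulrN.
by rewrite orth oppr_eq0.
Qed.

Lemma dft_inv (f : Z -> R[i]) j : \sum_(k : Z) dft f k * chi (j * k) = N%:R * f j.
Proof.
under eq_bigr do rewrite dftE mulr_suml.
rewrite exchange_big /=.
under eq_bigr => l _.
  under eq_bigr => k _ do rewrite -mulrA -chiN -chiD -mulNr -mulrDl [(_ + _) * k]mulrC.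
  rewrite -mulr_sumr orth.
  over.
rewrite (bigD1 j) // big1 => [|l /andP[_ lj]].
  by rewrite addNr eqxx muln1 /= addr0 mulrC.
by rewrite addr_eq0 eqr_opp (negPf lj) muln0 mulr0.
Qed.

Lemma dft_inj (f g : Z -> R[i]) : (forall k, dft f k = dft g k) -> forall j, f j = g j.
Proof.
move=> h j; apply: (@mulfI _ (N%:R)); first by rewrite pnatr_eq0.
by rewrite -!dft_inv; apply: eq_bigr => k _; rewrite h.
Qed.

Lemma dft_shift (f : Z -> R[i]) c k :
  dft (fun j => f (j + c)) k = chi (c * k) * dft f k.
Proof.
rewrite !dftE mulr_sumr [RHS](reindex_inj (addIr c)) /=.
apply: eq_bigr => j _; rewrite mulrDl chiD invfM.
by rewrite [RHS]mulrC -mulrA divfK // chi_neq0.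
Qed.

Lemma zt_conj : (zt^*)%C = zt^-1.
Proof.
have h : zt * (zt^*)%C = 1.
  rewrite /zeta; apply/eqP; rewrite eq_complex /=.
  have := cos2Dsin2 (2 * pi / N%:R : R); rewrite !expr2 => e.
  by apply/andP; split; apply/eqP; [rewrite -[RHS]e|]; ring.
by rewrite -[LHS]mul1r -(mulVf zt_neq0) -mulrA h mulr1.
Qed.

Lemma chi_conj u : ((chi u)^*)%C = (chi u)^-1.
Proof. by rewrite /chi rmorphXn -exprVn -zt_conj. Qed.

Lemma dft_real (y : Z -> R[i]) k : (forall j, 0 <= y j) ->
  dft y (- k) = ((dft y k)^*)%C.
Proof.
move=> hy; rewrite !dftE rmorph_sum; apply: eq_bigr => j _.
rewrite rmorphM /= fmorphV /= chi_conj invrK mulrN chiN invrK.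
by congr (_ * _); apply/esym; exact: (geC0_conj (hy j)).
Qed.

Lemma bisp (y y' : Z -> R[i]) : (forall j, 0 <= y j) -> (forall j, 0 <= y' j) ->
  (forall k, dft y k != 0) ->
  (forall i j, dft y' i * dft y' j * dft y' (- (i + j)) =
               dft y i * dft y j * dft y (- (i + j))) ->
  exists c : Z, forall j, y' j = y (j + c).
Proof.
move=> hy hy' ha hB.
have pos (f : Z -> R[i]) : (forall j, 0 <= f j) -> 0 <= dft f 0.
  move=> hf; rewrite dftE; apply: sumr_ge0 => j _.
  by rewrite mulr0 chi0 invr1 mulr1.
have b0e : dft y' 0 = dft y 0.
  have := hB 0 0; rewrite addr0 oppr0 => h.
  apply/eqP; rewrite -(@eqrXn2 _ 3) ?pos //.
  by apply/eqP; rewrite !exprSr expr0 !mul1r.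
have nb k : dft y' k * dft y' (- k) = dft y k * dft y (- k).
  have := hB k 0; rewrite addr0 b0e.
  rewrite ![_ * dft y 0 * _]mulrAC; apply: mulIf; exact: ha.
pose r k := dft y' k / dft y k.
have rinv k : r k * r (- k) = 1.
  by rewrite /r mulf_div nb divff // mulf_neq0.
have rmul i j : r (i + j) = r i * r j.
  have e1 : r i * r j * r (- (i + j)) = 1.
    by rewrite /r !mulf_div hB divff // !mulf_neq0.
  by rewrite -[LHS]mulr1 -e1 mulrCA rinv mulr1.
have r0 : r 0 = 1 by rewrite /r b0e divff.
have rnat m : r (m%:R) = r 1 ^+ m.
  elim: m => [|m IH]; first by rewrite r0 expr0.
  by rewrite mulrSr rmul IH exprSr.
have rk (k : Z) : r k = r 1 ^+ val k.
  by have := rnat (val k); rewrite natr_Zp.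
have r1N : r 1 ^+ N = 1.
  by rewrite -rnat (@pchar_Zp N) // r0.
have [m hm] := prim_rootP (@zprim R n) r1N.
exists (m : Z); apply: dft_inj => k.
rewrite dft_shift chiM.
have -> : dft y' k = r k * dft y k by rewrite /r divfK.
by rewrite rk hm -exprM.
Qed.
End DFT.

Section Poly.
Variables (R : realType) (n : nat).
Local Notation N := n.+2.
Local Notation Z := 'Z_N.
Local Notation T := {mpoly R[2 * N]}.

Lemma lo_proof (j : Z) : (val j < 2 * N)%N.
Proof. have h : (val j < N)%N := ltn_ord j; lia. Qed.
Lemma hi_proof (j : Z) : (N + val j < 2 * N)%N.
Proof. have h : (val j < N)%N := ltn_ord j; lia. Qed.
Definition lo (j : Z) : 'I_(2 * N) := Ordinal (lo_proof j).
Definition hi (j : Z) : 'I_(2 * N) := Ordinal (hi_proof j).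

Lemma rc_lo (x : Z -> R[i]) j : realcoords x (lo j) = complex.Re (x j).
Proof. rewrite /realcoords /= ltn_ord; by rewrite valZpK. Qed.
Lemma rc_hi (x : Z -> R[i]) j : realcoords x (hi j) = complex.Im (x j).
Proof.
rewrite /realcoords /=.
have -> : (N + val j < N)%N = false by apply/negbTE; rewrite -leqNgt leq_addr.
by rewrite addKn valZpK.
Qed.

Definition cev (v : 'I_(2 * N) -> R) (p : T * T) : R[i] := Complex p.1.@[v] p.2.@[v].
Definition pmul (p q : T * T) : T * T := (p.1 * q.1 - p.2 * q.2, p.1 * q.2 + p.2 * q.1).
Definition pnorm (p : T * T) : T * T := (p.1 ^+ 2 + p.2 ^+ 2, 0).
Definition psum (F : Z -> T * T) : T * T := (\sum_j (F j).1, \sum_j (F j).2).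
Definition cC (c : R[i]) : T * T := ((complex.Re c)%:MP, (complex.Im c)%:MP).
Definition Xc (j : Z) : T * T := ('X_(lo j), 'X_(hi j)).

Lemma cev_mul v p q : cev v (pmul p q) = cev v p * cev v q.
Proof. by rewrite /cev /pmul /= mevalB mevalD !mevalM. Qed.

Lemma cev_norm v p : cev v (pnorm p) = `|cev v p| ^+ 2.
Proof.
rewrite -add_Re2_Im2 /cev /pnorm /= meval0 mevalD !expr2 !mevalM.
by [].
Qed.

Lemma cev_sum v F : cev v (psum F) = \sum_j cev v (F j).
Proof.
rewrite /cev /psum /=.
apply: (big_ind3 (fun s1 s2 c => Complex s1.@[v] s2.@[v] = c)).
- by rewrite !meval0.
- by move=> a1 a2 a3 b1 b2 b3 <- <-; rewrite !mevalD.
- by move=> i _.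
Qed.

Lemma cev_C v c : cev v (cC c) = c.
Proof. by rewrite /cev /cC /= !mevalC; case: c. Qed.

Lemma cev_X x j : cev (realcoords x) (Xc j) = x j.
Proof. by rewrite /cev /Xc /= !mevalXU rc_lo rc_hi; case: (x j). Qed.

Definition wc (j k : Z) : R[i] := (zeta R N ^+ (val j * val k))^-1.
Definition Yp (k : Z) := psum (fun j => pmul (pnorm (Xc j)) (cC (wc j k))).
Definition Xh (k : Z) := psum (fun j => pmul (Xc j) (cC (wc j k))).
Definition Zp (k : Z) := psum (fun j => pmul (pnorm (Xh j)) (cC (wc j k))).
Definition Qp : T := \prod_(k : Z) ((pnorm (Yp k)).1 * (pnorm (Zp k)).1).

Lemma Xh_ev x k : cev (realcoords x) (Xh k) = dft x k.
Proof. by rewrite cev_sum; apply: eq_bigr => j _; rewrite cev_mul cev_C cev_X. Qed.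

Lemma Yp_ev x k : cev (realcoords x) (Yp k) = dft (sqmag x) k.
Proof.
by rewrite cev_sum; apply: eq_bigr => j _; rewrite cev_mul cev_C cev_norm cev_X.
Qed.

Lemma Zp_ev x k : cev (realcoords x) (Zp k) = dft (sqmag (dft x)) k.
Proof.
by rewrite cev_sum; apply: eq_bigr => j _; rewrite cev_mul cev_C cev_norm Xh_ev.
Qed.

Lemma pnorm_ev v p : real_complex R ((pnorm p).1.@[v]) = `|cev v p| ^+ 2.
Proof. by rewrite -cev_norm /cev /pnorm /= meval0. Qed.

Lemma rcM (a b : R) : real_complex R (a * b) = real_complex R a * real_complex R b.
Proof. by rewrite rmorphM. Qed.

Lemma Qp_ev x : real_complex R (Qp.@[realcoords x]) =
  \prod_(k : Z) (`|dft (sqmag x) k| ^+ 2 * `|dft (sqmag (dft x)) k| ^+ 2).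
Proof.
rewrite /Qp.
apply: (big_ind2 (fun a b => real_complex R a.@[realcoords x] = b)).
- by rewrite meval1.
- by move=> a1 b1 a2 b2 <- <-; rewrite mevalM rcM.
move=> k _; rewrite mevalM rcM; congr (_ * _).
  by rewrite -Yp_ev; exact: pnorm_ev.
by rewrite -Zp_ev; exact: pnorm_ev.
Qed.

Lemma Qp_neq0 x : (Qp.@[realcoords x] != 0) =
  [forall k : Z, (dft (sqmag x) k != 0) && (dft (sqmag (dft x)) k != 0)].
Proof.
have -> : (Qp.@[realcoords x] != 0) = (real_complex R (Qp.@[realcoords x]) != 0).
  by congr negb; apply/eqP/eqP => [->|[]] //.
rewrite Qp_ev; apply/prodf_neq0/forallP => [h k|h k _].
  by have := h k isT; rewrite mulf_eq0 negb_or !expf_eq0 /= !normr_eq0.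
by have := h k; rewrite mulf_eq0 negb_or !expf_eq0 /= !normr_eq0.
Qed.
End Poly.

Section X0.
Variables (R : realType) (n : nat).
Local Notation N := n.+2.
Local Notation Z := 'Z_N.

Lemma dft_ext (f g : Z -> R[i]) k : (forall j, f j = g j) -> dft f k = dft g k.
Proof. by move=> h; rewrite /dft; apply: eq_bigr => j _; rewrite h. Qed.

Lemma dft_delta (c d : nat) (k : Z) :
  dft (fun j : Z => ((c + d * (j == 0%R))%N%:R : R[i])) k = (d + c * N * (k == 0%R))%N%:R.
Proof.
rewrite dftE.
under eq_bigr do rewrite natrD mulrDl natrM.
rewrite big_split /= -mulr_sumr orthV.
rewrite (bigD1 0) // big1 => [|j]; last first.
  by rewrite ?andTb => /negPf ->; rewrite mulr0 mul0r.
rewrite /= mul0r chi0 invr1 !mulr1 addr0.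
by rewrite -natrM -natrD addnC mulnA.
Qed.

Lemma sq_nat (c d : nat) (b : bool) :
  `|((c + d * b)%N%:R : R[i])| ^+ 2 = (c * c + (2 * c * d + d * d) * b)%N%:R.
Proof.
rewrite normr_nat -natrX; congr (_%:R); case: b => /=; nia.
Qed.

Definition x0 : Z -> R[i] := fun j => (1 + 1 * (j == 0%R))%N%:R.

Lemma x0_good k : dft (sqmag x0) k != 0 /\ dft (sqmag (dft x0)) k != 0.
Proof.
split.
  rewrite (@dft_ext _ (fun j : Z => ((1 * 1 + (2 * 1 * 1 + 1 * 1) * (j == 0%R))%N%:R : R[i]))).
    by rewrite dft_delta pnatr_eq0.
  by move=> j; rewrite /sqmag /x0 sq_nat.
rewrite (@dft_ext _ (fun j : Z => ((1 * 1 + (2 * 1 * (1 * N) + (1 * N) * (1 * N)) * (j == 0%R))%N%:R : R[i]))).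
  by rewrite dft_delta pnatr_eq0.
by move=> j; rewrite /sqmag /x0 dft_delta sq_nat.
Qed.
End X0.

Theorem theorem5p3 (R : realType) (N : nat) (hN : (2 <= N)%N) :
  generic (fun x : 'Z_N -> R[i] =>
    forall x' : 'Z_N -> R[i], BH_eq x' x ->
      exists k0 n0 : 'Z_N,
        forall j k : 'Z_N,
          `|x' j| = `|x (j + k0)| /\ `|dft x' k| = `|dft x (k + n0)|).
Proof.
case: N hN => [|[|n]] // _.
exists (Qp R n); split.
  apply/negP => /eqP Q0.
  have := @Qp_neq0 R n (x0 R n); rewrite Q0 meval0 eqxx => h.
  suff : ~~ true by [].
  rewrite h; apply/forallP => k; by have [-> ->] := x0_good R n k.
move=> x hQ x' [hM hFM].
rewrite Qp_neq0 in hQ; move/forallP: hQ => hQ.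
have hy (f : 'Z_n.+2 -> R[i]) j : 0 <= sqmag f j by rewrite /sqmag exprn_ge0.
have [k0 hk0] := @bisp R n (sqmag x) (sqmag x') (hy x) (hy x')
  (fun k => (andP (hQ k)).1) (fun i j => esym (hM i j)).
have [n0 hn0] := @bisp R n (sqmag (dft x)) (sqmag (dft x')) (hy _) (hy _)
  (fun k => (andP (hQ k)).2) (fun i j => esym (hFM i j)).
exists k0, n0 => j k; split.
  by have := hk0 j; rewrite /sqmag => /eqP; rewrite eqrXn2 // => /eqP.
by have := hn0 k; rewrite /sqmag => /eqP; rewrite eqrXn2 // => /eqP.
Qed.
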